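(* Let $W$ be a finite-dimensional vector space over $\mathbb{F}_q$ and let $\mathcal{C}$ be a code (a set of subspaces of $W$) with $|\mathcal{C}|\ge 2$. Let $D(\mathcal{C})=\min_{X,Y\in\mathcal{C},X\ne Y} d(X,Y)$ and $\ell(\mathcal{C})=\max_{X\in\mathcal{C}}\dim X$, where $d(A,B)=\dim(A+B)-\dim(A\cap B)$. Let $V\in\mathcal{C}$, let $k\ge 0$ be an integer, and let $V'$ be a subspace of $V$ such that $V'$ is a $k$-dimensional subspace of $V$ if $\dim V>k$, and $V'=V$ otherwise. Let $E$ be a subspace of $W$ with $E\cap V'=\{0\}$ and $\dim E=t$, and let $U=V'\oplus E$. Let $\rho=\max\{0,\ell(\mathcal{C})-k\}$. If $2(t+\rho)<D(\mathcal{C})$, then $d(U,V)<d(U,T)$ for every $T\in\mathcal{C}$ with $T\ne V$; i.e., a minimum distance decoder (which returns a codeword nearest to $U$ in the metric $d$) returns $V$.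
   Context: A code is a nonempty set of subspaces of $W$. A minimum distance decoder takes a subspace $U$ and returns a codeword $V\in\mathcal{C}$ with $d(U,V)\le d(U,V'')$ for all $V''\in\mathcal{C}$. *)

(* Defs.v *)
From HB Require Import structures.
From mathcomp Require Import all_boot all_order all_algebra.
Set Implicit Arguments. Unset Strict Implicit. Unset Printing Implicit Defensive.
Import GRing.Theory.
Local Open Scope ring_scope.

Definition sdist (F : fieldType) (W : vectType F) (A B : {vspace W}) : nat :=
  (\dim (A + B)%VS - \dim (A :&: B)%VS)%N.

(* D(C) = min over distinct pairs X,Y in C of d(X,Y).  The initial value
   \dim fullv is an upper bound of every d(X,Y), so for |C| >= 2 this is
   exactly the minimum. *)
Definition min_dist (F : fieldType) (W : vectType F) (C : seq {vspace W}) : nat :=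
  let top := \dim (fullv : {vspace W}) in
  \big[minn/top]_(X <- C) \big[minn/top]_(Y <- C | X != Y) sdist X Y.

Definition max_dim (F : fieldType) (W : vectType F) (C : seq {vspace W}) : nat :=
  \max_(X <- C) \dim X.

(* Main.v *)
Require Import Defs.
From HB Require Import structures.
From mathcomp Require Import all_boot all_order all_algebra.
From mathcomp Require Import zify.

Lemma sdistE {F : fieldType} {W : vectType F} (A B : {vspace W}) :
  (sdist A B + 2 * \dim (A :&: B)%VS = \dim A + \dim B /\
   \dim (A :&: B)%VS <= \dim A /\ \dim (A :&: B)%VS <= \dim B)%N.
Proof.
have h := dimv_sum_cap A B.
have h1 := dimvS (capvSl A B). have h2 := dimvS (capvSr A B).
have h3 := dimvS (subv_trans (capvSl A B) (addvSl A B)).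
rewrite /sdist; lia.
Qed.

Lemma sdist_tri {F : fieldType} {W : vectType F} (A B C : {vspace W}) :
  (sdist A C <= sdist A B + sdist B C)%N.
Proof.
have [e1 [_ _]] := sdistE A B. have [e2 [_ _]] := sdistE B C.
have [e3 [_ _]] := sdistE A C.
have h := dimv_sum_cap (A :&: B)%VS (B :&: C)%VS.
have hs : (\dim ((A :&: B) + (B :&: C))%VS <= \dim B)%N.
  by apply: dimvS; rewrite subv_add capvSr capvSl.
have hc : (\dim ((A :&: B) :&: (B :&: C))%VS <= \dim (A :&: C)%VS)%N.
  apply: dimvS; rewrite subv_cap; apply/andP; split.
    exact: subv_trans (capvSl _ _) (capvSl _ _).
  exact: subv_trans (capvSr _ _) (capvSr _ _).
lia.
Qed.

Lemma sdistC {F : fieldType} {W : vectType F} (A B : {vspace W}) :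
  sdist A B = sdist B A.
Proof. by rewrite /sdist addvC capvC. Qed.

Lemma bigmin_le {T : eqType} (s : seq T) (P : pred T) (F : T -> nat) top x :
  x \in s -> P x -> (\big[minn/top]_(y <- s | P y) F y <= F x)%N.
Proof.
elim: s => // a s IH; rewrite in_cons big_cons => /orP [/eqP -> -> | xs Px].
  exact: geq_minl.
case: (P a); last exact: IH.
exact: leq_trans (geq_minr _ _) (IH xs Px).
Qed.

Theorem theorem2 (F : finFieldType) (W : vectType F) (C : seq {vspace W})
  (HC : exists X Y, [/\ X \in C, Y \in C & X != Y])
  (V : {vspace W}) (HV : V \in C) (k : nat) (V' : {vspace W})
  (HV'sub : (V' <= V)%VS)
  (HV' : if (k < \dim V)%N then \dim V' = k else V' = V)
  (E : {vspace W}) (t : nat)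
  (HEV : (E :&: V')%VS = 0%VS) (HEt : \dim E = t)
  (U : {vspace W}) (HU : U = (V' + E)%VS) :
  let rho := maxn 0 (max_dim C - k) in
  (2 * (t + rho) < min_dist C)%N ->
  forall T, T \in C -> T != V -> (sdist U V < sdist U T)%N.
Proof.
move=> rho Hlt T HT HTV.
have hD : (min_dist C <= sdist V T)%N.
  rewrite /min_dist.
  set top := \dim (fullv : {vspace W}).
  apply: leq_trans (@bigmin_le _ C predT
     (fun X => \big[minn/top]_(Y <- C | X != Y) sdist X Y) top V HV isT) _.
  apply: (@bigmin_le _ C (fun Y => V != Y) (fun Y => sdist V Y) top T HT); by rewrite eq_sym.
have hl : (\dim V <= max_dim C)%N.
  by rewrite /max_dim; apply: (leq_bigmax_seq _ HV).
have hUV : (sdist U V <= t + rho)%N.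
  have [e1 [_ _]] := sdistE U V.
  have hU := dimv_sum_cap V' E.
  rewrite capvC HEV dimv0 -HU HEt in hU.
  have hc : (\dim V' <= \dim (U :&: V)%VS)%N.
    by apply: dimvS; rewrite subv_cap HU addvSl HV'sub.
  have hV : (\dim V - \dim V' <= rho)%N.
    rewrite /rho; move: HV'; case: ifP => _.
      by move=> ->; lia.
    by move=> ->; lia.
  lia.
have tri := sdist_tri V U T.
rewrite [sdist V U]sdistC in tri.
lia.
Qed.
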